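(* For every fixed $c\in[1,\infty)$, \[ \Pr\bigl[L_n\ge c\ln n\bigr]=n^{-K(c)+o(1)}\qquad(n\to\infty), \] where $K(c)=\dfrac{(1-c)^2}{8c}$.
   Context: Let $\xi_1,\xi_2,\dots$ be i.i.d. random variables with $\Pr[\xi_i=1]=\Pr[\xi_i=-1]=1/2$, and let $S_t=\sum_{i=1}^t\xi_i$ (simple symmetric random walk, $S_0=0$). Define $L_n=\sum_{i=1}^n S_i^2/i^2$. *)

(* Defs.v *)
From Stdlib Require Import Reals Lra List.
Import ListNotations.
Open Scope R_scope.

(* All 2^n sign sequences (xi_1,...,xi_n) in {+1,-1}^n; the uniform measure
   on this list is the law of (xi_1,...,xi_n). *)
Fixpoint sign_seqs (n : nat) : list (list R) :=
  match n with
  | O => [[]]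
  | S m => map (cons 1) (sign_seqs m) ++ map (cons (-1)) (sign_seqs m)
  end.

Definition walk (xs : list R) (t : nat) : R := fold_right Rplus 0 (firstn t xs).

Definition Lsum (xs : list R) : R :=
  fold_right (fun i acc => (walk xs i)^2 / (INR i)^2 + acc) 0 (seq 1 (length xs)).

Definition prob_L (c : R) (n : nat) : R :=
  INR (length (filter (fun xs => if Rle_dec (c * ln (INR n)) (Lsum xs) then true else false)
                      (sign_seqs n))) / 2 ^ n.

Definition Kc (c : R) : R := (1 - c)^2 / (8 * c).

(* Main.v *)
Require Import Defs.
From Stdlib Require Import Reals Lra List.
From Stdlib Require Import Lia ZArith.
From Coquelicot Require Coquelicot.
Import ListNotations.
Open Scope R_scope.

Section CalcSec.
Import Coquelicot.Coquelicot.

Lemma ln_taylor3 x : -1 < x -> ln (1 + x) <= x - x^2/2 + x^3/3.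
Proof.
  intro Hx.
  set (f := fun y => y - y^2/2 + y^3/3 - ln (1 + y)).
  set (f' := fun y => 1 - y + y^2 - / (1 + y)).
  assert (Hd : forall c, -1 < c -> derivable_pt_lim f c (f' c)).
  { intros c Hc. apply is_derive_Reals. unfold f, f'; cbv beta.
    auto_derive. lra. field. lra. }
  assert (Hf0 : f 0 = 0). { unfold f; cbv beta. rewrite Rplus_0_r, ln_1. simpl; field. }
  assert (Hfx : 0 <= f x).
  { destruct (Rtotal_order x 0) as [Hlt|[Heq|Hgt]].
    - destruct (MVT_cor2 f f' x 0 Hlt) as [c [Hc1 Hc2]].
      { intros c Hc. apply Hd. lra. }
      assert (f' c < 0).
      { unfold f'. assert (1 + c > 0) by lra.
        replace (1 - c + c^2 - / (1+c)) with (c^3 / (1 + c)) by (field; lra).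
        apply Rdiv_neg_pos; [|lra]. replace (c^3) with (c * (c*c)) by ring.
        apply Rmult_neg_pos; [lra|]. nra. }
      nra.
    - subst. lra.
    - destruct (MVT_cor2 f f' 0 x Hgt) as [c [Hc1 Hc2]].
      { intros c Hc. apply Hd. lra. }
      assert (f' c > 0).
      { unfold f'. assert (1 + c > 0) by lra.
        replace (1 - c + c^2 - / (1+c)) with (c^3 / (1 + c)) by (field; lra).
        apply Rdiv_lt_0_compat; [|lra]. replace (c^3) with (c * (c*c)) by ring.
        apply Rmult_lt_0_compat; nra. }
      nra. }
  unfold f in Hfx. lra.
Qed.

Lemma ln_le_x x : -1 < x -> ln (1 + x) <= x.
Proof.
  intro H. apply Rle_trans with (ln (exp x)); [|rewrite ln_exp; lra].
  apply ln_le; [lra|]. apply exp_ineq1_le.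
Qed.

Lemma aux_z y : 0 <= y -> 1 - y <= exp (-2*y) * (1 + y).
Proof.
  intro Hy.
  destruct (Req_dec y 0) as [->|Hne].
  { replace (-2*0) with 0 by ring. rewrite exp_0. lra. }
  set (z := fun u => exp (-2*u) * (1 + u) - (1 - u)).
  set (z' := fun u => 1 - (1 + 2*u) * exp (-2*u)).
  assert (Hd : forall c, derivable_pt_lim z c (z' c)).
  { intros c. apply is_derive_Reals. unfold z, z'; cbv beta. auto_derive. auto. ring. }
  destruct (MVT_cor2 z z' 0 y) as [c [Hc1 Hc2]]; [lra| intros; apply Hd |].
  assert (0 <= z' c).
  { unfold z'. pose proof (exp_ineq1_le (2*c)).
    assert (exp (-2*c) * exp (2*c) = 1).
    { rewrite <- exp_plus. replace (-2*c+2*c) with 0 by ring. apply exp_0. }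
    pose proof (exp_pos (-2*c)). nra. }
  assert (z 0 = 0). { unfold z; cbv beta. replace (-2*0) with 0 by ring. rewrite exp_0. ring. }
  assert (Hzy : 0 <= z y) by nra.
  unfold z in Hzy; cbv beta in Hzy. lra.
Qed.

Lemma tanh_le y : 0 <= y -> exp y - exp (-y) <= y * (exp y + exp (-y)).
Proof.
  intro Hy. pose proof (aux_z y Hy).
  assert (E : exp (-2*y) = exp (-y) * exp (-y)) by (rewrite <- exp_plus; f_equal; ring).
  assert (E2 : exp y * exp (-y) = 1) by (rewrite <- exp_plus; replace (y + -y) with 0 by ring; apply exp_0).
  pose proof (exp_pos y). pose proof (exp_pos (-y)).
  rewrite E in H.
  assert (exp y * (1 - y) <= exp (-y) * (1 + y)).
  { apply Rmult_le_compat_l with (r := exp y) in H; [|lra].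
    replace (exp y * (exp (-y) * exp (-y) * (1 + y))) with ((exp y * exp (-y)) * exp (-y) * (1+y)) in H by ring.
    rewrite E2 in H. lra. }
  nra.
Qed.

Lemma cosh_le y : exp y + exp (-y) <= 2 * exp (y^2/2).
Proof.
  assert (Hsym : forall y, 0 <= y -> exp y + exp (-y) <= 2 * exp (y^2/2)).
  { clear y. intros y Hy.
    set (phi := fun u => u^2/2 - ln ((exp u + exp (-u))/2)).
    set (phi' := fun u => u - (exp u - exp (-u)) / (exp u + exp (-u))).
    assert (Hd : forall c, derivable_pt_lim phi c (phi' c)).
    { intros c. apply is_derive_Reals. unfold phi, phi'; cbv beta. auto_derive.
      - pose proof (exp_pos c). pose proof (exp_pos (-c)). lra.
      - pose proof (exp_pos c). pose proof (exp_pos (-c)). field. lra. }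
    assert (Hp0 : phi 0 = 0).
    { unfold phi; cbv beta. replace (-0) with 0 by ring. rewrite exp_0.
      replace ((1+1)/2) with 1 by field. rewrite ln_1. field. }
    assert (Hpy : 0 <= phi y).
    { destruct (Req_dec y 0) as [->|Hne]; [lra|].
      destruct (MVT_cor2 phi phi' 0 y) as [c [Hc1 Hc2]]; [lra| intros; apply Hd |].
      assert (0 <= phi' c).
      { unfold phi'. pose proof (tanh_le c ltac:(lra)).
        pose proof (exp_pos c). pose proof (exp_pos (-c)).
        set (S := exp c + exp (-c)) in *.
        assert (HS : 0 < S) by (unfold S; lra).
        assert ((exp c - exp (-c)) / S <= c * S / S).
        { unfold Rdiv. apply Rmult_le_compat_r; [left; apply Rinv_0_lt_compat; lra| lra]. }
        replace (c * S / S) with c in H2 by (field; lra). lra. }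
      nra. }
    unfold phi in Hpy.
    assert (ln ((exp y + exp (-y))/2) <= y^2/2) by lra.
    pose proof (exp_pos y). pose proof (exp_pos (-y)).
    assert (HE : exp (ln ((exp y + exp (-y))/2)) = (exp y + exp (-y))/2) by (apply exp_ln; lra).
    assert (exp (ln ((exp y + exp (-y)) / 2)) <= exp (y^2/2)).
    { destruct (Rle_lt_or_eq_dec _ _ H) as [Hl|He]. left. apply exp_increasing; auto. rewrite He; lra. }
    lra. }
  destruct (Rle_dec 0 y). apply Hsym; auto.
  pose proof (Hsym (-y) ltac:(lra)). replace (- - y) with y in H by ring.
  replace ((-y)^2) with (y^2) in H by ring. lra.
Qed.

Lemma ln_ratio a b : 0 < a -> 0 < b -> ln b - ln a = ln (b / a).
Proof.
  intros Ha Hb. replace b with (a * (b / a)) at 1 by (field; lra).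
  rewrite ln_mult; [ring | lra |]. apply Rdiv_lt_0_compat; lra.
Qed.

Lemma inv_le_ln t : 0 < t -> / (t + 1) <= ln (t + 1) - ln t.
Proof.
  intro Ht. assert (ln t - ln (t+1) <= - / (t+1)).
  { rewrite ln_ratio by lra.
    replace (t / (t+1)) with (1 + - / (t+1)) by (field; lra).
    apply ln_le_x. assert (/ (t+1) < 1).
    { rewrite <- Rinv_1. apply Rinv_lt_contravar; lra. }
    lra. }
  lra.
Qed.

Lemma ln_le_inv t : 0 < t -> ln (t + 1) - ln t <= / t.
Proof.
  intro Ht. rewrite ln_ratio by lra.
  replace ((t+1) / t) with (1 + / t) by (field; lra).
  apply ln_le_x. assert (0 < / t) by (apply Rinv_0_lt_compat; lra). lra.
Qed.

Lemma exp_le_exp a b : a <= b -> exp a <= exp b.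
Proof. intro H. destruct H; [left; apply exp_increasing; auto| subst; lra]. Qed.

Lemma Rdiv_le_0_compat a b : 0 <= a -> 0 < b -> 0 <= a / b.
Proof. intros. unfold Rdiv. apply Rmult_le_pos; auto. left. apply Rinv_0_lt_compat; auto. Qed.

Lemma young x y eps : 1 <= y -> 0 <= x < 1 -> 0 < eps < 1 ->
  exp (x * ln y) <= eps * y + exp (x * (ln (/ eps) / (1 - x))).
Proof.
  intros Hy Hx He.
  set (L := ln (/ eps) / (1 - x)).
  assert (Hy0 : 0 < y) by lra.
  pose proof (exp_pos (x * L)).
  destruct (Rle_dec (ln y) L) as [HL|HL].
  - assert (exp (x * ln y) <= exp (x * L)) by (apply exp_le_exp; apply Rmult_le_compat_l; lra).
    nra.
  - assert (HL' : L < ln y) by lra.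
    assert (Hln : ln (/ eps) < (1 - x) * ln y).
    { unfold L in HL'. apply Rmult_lt_compat_l with (r := 1 - x) in HL'; [|lra].
      replace ((1 - x) * (ln (/ eps) / (1 - x))) with (ln (/ eps)) in HL' by (field; lra). lra. }
    rewrite ln_Rinv in Hln by lra.
    assert (x * ln y < ln (eps * y)) by (rewrite ln_mult by lra; lra).
    assert (exp (x * ln y) < eps * y).
    { rewrite <- (exp_ln (eps * y)) by nra. apply exp_increasing. auto. }
    lra.
Qed.

Lemma exists_nat_gt A : exists n : nat, A < INR n.
Proof.
  destruct (archimed A) as [H1 _].
  destruct (Z_le_gt_dec 0 (up A)) as [Hz|Hz].
  - exists (Z.to_nat (up A)). rewrite INR_IZR_INZ, Z2Nat.id by lia. lra.
  - exists 0%nat. simpl. apply Z.gt_lt in Hz. apply IZR_lt in Hz. lra.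
Qed.

Lemma ln_le_mono x y : 0 < x -> x <= y -> ln x <= ln y.
Proof. intros. apply ln_le; auto. Qed.

End CalcSec.

Definition sumL (l : list (list R)) (f : list R -> R) : R :=
  fold_right (fun xs acc => f xs + acc) 0 l.

Lemma sumL_app l1 l2 f : sumL (l1 ++ l2) f = sumL l1 f + sumL l2 f.
Proof. induction l1; simpl; [ring| rewrite IHl1; ring]. Qed.

Lemma sumL_map l g f : sumL (map g l) f = sumL l (fun xs => f (g xs)).
Proof. induction l; simpl; [ring| rewrite IHl; ring]. Qed.

Lemma sumL_le l f g : (forall xs, f xs <= g xs) -> sumL l f <= sumL l g.
Proof. intro H. induction l; simpl; [lra| specialize (H a); lra]. Qed.

Lemma sumL_ext l f g : (forall xs, f xs = g xs) -> sumL l f = sumL l g.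
Proof. intro H. induction l; simpl; [ring| rewrite IHl, H; ring]. Qed.

Lemma sumL_plus l f g : sumL l (fun xs => f xs + g xs) = sumL l f + sumL l g.
Proof. induction l; simpl; [ring| rewrite IHl; ring]. Qed.

Lemma sumL_scal l k f : sumL l (fun xs => k * f xs) = k * sumL l f.
Proof. induction l; simpl; [ring| rewrite IHl; ring]. Qed.

Definition Ex (m : nat) (f : list R -> R) : R := sumL (sign_seqs m) f / 2 ^ m.

Lemma Ex_S m f : Ex (S m) f = (Ex m (fun xs => f (1 :: xs)) + Ex m (fun xs => f (-1 :: xs))) / 2.
Proof.
  unfold Ex. simpl sign_seqs. rewrite sumL_app, !sumL_map. simpl pow.
  assert (0 < 2 ^ m) by (apply pow_lt; lra). field. lra.
Qed.

Lemma Ex_le m f g : (forall xs, f xs <= g xs) -> Ex m f <= Ex m g.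
Proof.
  intro H. unfold Ex. assert (0 < 2 ^ m) by (apply pow_lt; lra).
  unfold Rdiv. apply Rmult_le_compat_r. left; apply Rinv_0_lt_compat; lra.
  apply sumL_le; auto.
Qed.

Lemma Ex_plus m f g : Ex m (fun xs => f xs + g xs) = Ex m f + Ex m g.
Proof. unfold Ex. rewrite sumL_plus. field. apply pow_nonzero. lra. Qed.

Lemma Ex_scal m k f : Ex m (fun xs => k * f xs) = k * Ex m f.
Proof. unfold Ex. rewrite sumL_scal. field. apply pow_nonzero. lra. Qed.

Lemma Ex_ext m f g : (forall xs, f xs = g xs) -> Ex m f = Ex m g.
Proof. intro H. apply Rle_antisym; apply Ex_le; intro; rewrite H; lra. Qed.

Fixpoint Phi (s : R) (t : nat) (xs : list R) : R :=
  match xs with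
  | [] => 0
  | x :: xs' => (s + x) ^ 2 / (INR (S t)) ^ 2 + Phi (s + x) (S t) xs'
  end.

Lemma fold_map_nat (f : nat -> R -> R) (g : nat -> nat) l a :
  fold_right f a (map g l) = fold_right (fun i acc => f (g i) acc) a l.
Proof. induction l; simpl; congruence. Qed.

Lemma fold_ext (f g : nat -> R -> R) l a :
  (forall i acc, f i acc = g i acc) -> fold_right f a l = fold_right g a l.
Proof. intro H. induction l; simpl; [reflexivity| rewrite IHl; apply H]. Qed.

Lemma walk_cons x xs i : walk (x :: xs) (S i) = x + walk xs i.
Proof. reflexivity. Qed.

Lemma Phi_fold xs : forall s t,
  fold_right (fun i acc => (s + walk xs i) ^ 2 / (INR (t + i)) ^ 2 + acc) 0 (seq 1 (length xs))
  = Phi s t xs.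
Proof.
  induction xs as [|x xs IH]; intros s t; [reflexivity|].
  cbn [length seq fold_right Phi].
  rewrite <- seq_shift, fold_map_nat.
  rewrite <- (IH (s + x) (S t)).
  f_equal.
  - rewrite walk_cons. unfold walk. simpl. replace (t + 1)%nat with (S t) by lia.
    rewrite Rplus_0_r. reflexivity.
  - apply fold_ext. intros i acc. rewrite walk_cons.
    replace (t + S i)%nat with (S t + i)%nat by lia. f_equal. f_equal. ring.
Qed.

Lemma Lsum_Phi xs : Lsum xs = Phi 0 0 xs.
Proof.
  rewrite <- Phi_fold. unfold Lsum. apply fold_ext. intros i acc.
  rewrite Rplus_0_l. reflexivity.
Qed.

Lemma Ex_const m k : Ex m (fun _ => k) = k.
Proof.
  induction m. unfold Ex. simpl. field.
  rewrite Ex_S. rewrite IHm. field.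
Qed.

Lemma length_filter_sumL (p : list R -> bool) l :
  INR (length (filter p l)) = sumL l (fun xs => if p xs then 1 else 0).
Proof.
  induction l as [|a l IH]; [reflexivity|].
  unfold sumL in *. cbn [fold_right filter].
  destruct (p a); cbn [length]; [rewrite S_INR; rewrite IH; ring | rewrite IH; ring].
Qed.

Lemma prob_L_Ex c n :
  prob_L c n = Ex n (fun xs => if Rle_dec (c * ln (INR n)) (Lsum xs) then 1 else 0).
Proof.
  unfold prob_L, Ex. rewrite length_filter_sumL. f_equal.
  apply sumL_ext. intro xs. destruct Rle_dec; reflexivity.
Qed.

Definition Mg (mu s : R) (t m : nat) : R := Ex m (fun xs => exp (mu * Phi s t xs)).

Lemma Mg_S mu s t m :
  Mg mu s t (S m) =
  (exp (mu * ((s + 1) ^ 2 / (INR (S t)) ^ 2)) * Mg mu (s + 1) (S t) m +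
   exp (mu * ((s + -1) ^ 2 / (INR (S t)) ^ 2)) * Mg mu (s + -1) (S t) m) / 2.
Proof.
  unfold Mg. rewrite Ex_S. cbn [Phi].
  rewrite <- !Ex_scal. f_equal. f_equal; apply Ex_ext; intro xs;
  rewrite <- exp_plus; f_equal; ring.
Qed.

Lemma Mg_0 mu s t : Mg mu s t 0 = 1.
Proof. unfold Mg. unfold Ex. simpl. rewrite Rmult_0_r, exp_0. field. Qed.

Lemma Mg_Lsum mu n : Mg mu 0 0 n = Ex n (fun xs => exp (mu * Lsum xs)).
Proof. unfold Mg. apply Ex_ext. intro. rewrite Lsum_Phi. reflexivity. Qed.


Fixpoint ua (mu : R) (t m : nat) : R :=
  match m with
  | O => 0
  | S m' => let al := ua mu (S t) m' + mu / INR (S t) ^ 2 in al + 2 * al ^ 2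
  end.

Fixpoint ub (mu : R) (t m : nat) : R :=
  match m with
  | O => 0
  | S m' => ub mu (S t) m' + (ua mu (S t) m' + mu / INR (S t) ^ 2)
  end.

Lemma Mg_upper mu : forall m s t, Mg mu s t m <= exp (ua mu t m * s ^ 2 + ub mu t m).
Proof.
  induction m as [|m IH]; intros s t.
  - rewrite Mg_0. simpl. rewrite Rmult_0_l, Rplus_0_l, exp_0. lra.
  - rewrite Mg_S. cbn [ua ub]. cbv zeta.
    set (al := ua mu (S t) m + mu / INR (S t) ^ 2).
    set (b := ub mu (S t) m).
    assert (H1 : exp (mu * ((s + 1) ^ 2 / INR (S t) ^ 2)) * Mg mu (s + 1) (S t) m
                 <= exp (al * (s^2 + 1) + b) * exp (2 * al * s)).
    { rewrite <- exp_plus. eapply Rle_trans.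
      apply Rmult_le_compat_l; [left; apply exp_pos| apply IH].
      rewrite <- exp_plus. apply exp_le_exp. unfold al, b. right. field.
      apply not_0_INR; lia. }
    assert (H2 : exp (mu * ((s + -1) ^ 2 / INR (S t) ^ 2)) * Mg mu (s + -1) (S t) m
                 <= exp (al * (s^2 + 1) + b) * exp (- (2 * al * s))).
    { rewrite <- exp_plus. eapply Rle_trans.
      apply Rmult_le_compat_l; [left; apply exp_pos| apply IH].
      rewrite <- exp_plus. apply exp_le_exp. unfold al, b. right. field.
      apply not_0_INR; lia. }
    pose proof (cosh_le (2 * al * s)) as Hc.
    pose proof (exp_pos (al * (s^2 + 1) + b)).
    apply Rle_trans with (exp (al * (s ^ 2 + 1) + b) * exp ((2 * al * s) ^ 2 / 2)).
    + nra.
    + rewrite <- exp_plus. apply exp_le_exp. apply Req_le. field.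
Qed.

Section UB.
Variable sp : R.
Hypothesis Hsp : 0 < sp <= 1.
Let mu := (1 - sp ^ 2) / 8.
Let ka := (1 - sp) / 4.

Lemma ua_bound : forall m t, (1 <= t)%nat -> 0 <= ua mu t m <= ka / INR t.
Proof.
  induction m as [|m IH]; intros t Ht.
  - simpl. split; [lra|]. apply Rdiv_le_0_compat; [unfold ka; lra| apply lt_0_INR; lia].
  - cbn [ua]. destruct (IH (S t) ltac:(lia)) as [Hl Hu].
    set (T := INR (S t)) in *.
    assert (HT : INR (S t) = INR t + 1) by apply S_INR.
    assert (Ht1 : 1 <= INR t) by (apply (le_INR 1); lia).
    set (a := ua mu (S t) m) in *.
    assert (Hmu : 0 <= mu) by (unfold mu; nra).
    assert (HT0 : 0 < T) by (unfold T; rewrite HT; lra).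
    assert (HT2 : 0 < T ^ 2) by (unfold T; rewrite HT; nra).
    assert (Hm0 : 0 <= mu / T ^ 2) by (apply Rdiv_le_0_compat; lra).
    split; [nra|].
    set (al := a + mu / T ^ 2).
    assert (Hal : al <= (ka * T + mu) / T ^ 2).
    { unfold al. assert (a <= ka * T / T^2).
      { replace (ka * T / T^2) with (ka / T) by (field; unfold T; rewrite HT; lra). auto. }
      replace ((ka * T + mu) / T ^ 2) with (ka * T / T^2 + mu / T^2) by (field; lra). lra. }
    assert (Hal0 : 0 <= al) by (unfold al; lra).
    assert (Hbig : (ka * T + mu) / T ^ 2 + 2 * ((ka * T + mu) / T ^ 2) ^ 2 <= ka / INR t).
    { replace (INR t) with (T - 1) by (unfold T; rewrite HT; ring).
      assert (HT1 : 2 <= T) by (unfold T; rewrite HT; lra).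
      assert (Hk : ka - mu - 2 * ka ^ 2 = 0) by (unfold ka, mu; field).
      assert (Hk1 : 0 <= ka <= 1/4) by (unfold ka; lra).
      assert (Hk2 : mu <= ka) by (unfold ka, mu; nra).
      assert (E : ka / (T - 1) - ((ka * T + mu) / T ^ 2 + 2 * ((ka * T + mu) / T ^ 2) ^ 2)
        = - (T^3 * (mu - ka + 2 * ka^2) + T^2 * (- mu - 2 * ka^2 + 4 * ka * mu)
             + T * (2 * mu^2 - 4 * ka * mu) - 2 * mu^2) / (T^4 * (T - 1))).
      { field. lra. }
      assert (0 <= ka / (T - 1) - ((ka * T + mu) / T ^ 2 + 2 * ((ka * T + mu) / T ^ 2) ^ 2)).
      { rewrite E. apply Rdiv_le_0_compat; [| apply Rmult_lt_0_compat; nra].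
        replace (mu - ka + 2 * ka ^ 2) with 0 by lra.
        assert (c1 : 0 <= mu + 2 * ka^2 - 4 * ka * mu) by nra.
        assert (c2 : 0 <= 4 * ka * mu - 2 * mu^2) by nra.
        assert (0 <= T^2 * (mu + 2 * ka^2 - 4 * ka * mu)) by (apply Rmult_le_pos; nra).
        assert (0 <= T * (4 * ka * mu - 2 * mu^2)) by (apply Rmult_le_pos; nra).
        nra. }
      lra. }
    assert (al + 2 * al ^ 2 <= (ka * T + mu) / T ^ 2 + 2 * ((ka * T + mu) / T ^ 2) ^ 2) by nra.
    fold al. lra.
Qed.

Lemma ub_bound : forall m t, (1 <= t)%nat ->
  ub mu t m <= ka * (ln (INR (t + m)) - ln (INR t)) + mu * (/ INR t - / INR (t + m)).
Proof.
  induction m as [|m IH]; intros t Ht.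
  - simpl. rewrite Nat.add_0_r. lra.
  - cbn [ub]. specialize (IH (S t) ltac:(lia)).
    replace (S t + m)%nat with (t + S m)%nat in IH by lia.
    destruct (ua_bound m (S t) ltac:(lia)) as [_ Hu].
    assert (HT : INR (S t) = INR t + 1) by apply S_INR.
    assert (Ht1 : 1 <= INR t) by (apply (le_INR 1); lia).
    assert (Hl : / INR (S t) <= ln (INR (S t)) - ln (INR t)).
    { rewrite HT. apply inv_le_ln. lra. }
    assert (Hka : 0 <= ka) by (unfold ka; lra).
    assert (Hmu : 0 <= mu) by (unfold mu; nra).
    assert (H1 : ka / INR (S t) <= ka * (ln (INR (S t)) - ln (INR t))).
    { unfold Rdiv. apply Rmult_le_compat_l; auto. }
    assert (H2 : mu / INR (S t) ^ 2 <= mu * (/ INR t - / INR (S t))).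
    { replace (/ INR t - / INR (S t)) with (/ (INR t * INR (S t))) by (rewrite HT; field; lra).
      unfold Rdiv. apply Rmult_le_compat_l; auto.
      apply Rinv_le_contravar. rewrite HT; nra. rewrite HT; nra. }
    lra.
Qed.

Lemma mgf_upper n : (1 <= n)%nat ->
  Ex n (fun xs => exp (mu * Lsum xs)) <= exp (ka * ln (INR n) + ka + 2 * mu).
Proof.
  intro Hn. rewrite <- Mg_Lsum. eapply Rle_trans. apply Mg_upper.
  apply exp_le_exp. destruct n as [|n]; [lia|].
  cbn [ub]. pose proof (ub_bound n 1 (le_n 1)) as Hb.
  destruct (ua_bound n 1 (le_n 1)) as [_ Hu].
  replace (1 + n)%nat with (S n) in Hb by lia.
  replace (INR 1) with 1 in * by reflexivity.
  rewrite ln_1 in Hb.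
  assert (Hmu : 0 <= mu) by (unfold mu; nra).
  assert (0 < / INR (S n)) by (apply Rinv_0_lt_compat; apply lt_0_INR; lia).
  replace (mu / 1 ^ 2) with mu by field.
  replace (ka / 1) with ka in Hu by field.
  assert (mu * (/ 1 - / INR (S n)) <= mu) by (rewrite Rinv_1; nra).
  replace (0 ^ 2) with 0 by ring. lra.
Qed.
End UB.

Lemma wamgm q a b : 0 < q < 1 -> exp (q * a + (1 - q) * b) <= q * exp a + (1 - q) * exp b.
Proof.
  intro Hq. set (c := q * a + (1 - q) * b).
  pose proof (exp_ineq1_le (a - c)). pose proof (exp_ineq1_le (b - c)).
  assert (exp a = exp c * exp (a - c)) by (rewrite <- exp_plus; f_equal; ring).
  assert (exp b = exp c * exp (b - c)) by (rewrite <- exp_plus; f_equal; ring).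
  pose proof (exp_pos c).
  assert (q * (a - c) + (1 - q) * (b - c) = 0) by (unfold c; ring).
  rewrite H1, H2.
  assert (A1 : q * (exp c * (1 + (a - c))) <= q * (exp c * exp (a - c))).
  { apply Rmult_le_compat_l; [lra|]. apply Rmult_le_compat_l; lra. }
  assert (A2 : (1 - q) * (exp c * (1 + (b - c))) <= (1 - q) * (exp c * exp (b - c))).
  { apply Rmult_le_compat_l; [lra|]. apply Rmult_le_compat_l; lra. }
  assert (E : q * (exp c * (1 + (a - c))) + (1 - q) * (exp c * (1 + (b - c))) = exp c).
  { transitivity (exp c * (1 + (q * (a - c) + (1 - q) * (b - c)))); [ring|].
    rewrite H4. ring. }
  lra.
Qed.

Lemma gibbs2 u v m : -1 < m < 1 ->
  exp ((1 + m) / 2 * u + (1 - m) / 2 * v - (m ^ 2 / 2 + m ^ 4 / 3)) <= (exp u + exp v) / 2.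
Proof.
  intro Hm.
  set (q := (1 + m) / 2).
  assert (Hq : 0 < q < 1) by (unfold q; lra).
  pose proof (wamgm q (u - ln (1 + m)) (v - ln (1 - m)) Hq) as W.
  assert (E1 : q * exp (u - ln (1 + m)) = exp u / 2).
  { unfold Rminus. rewrite exp_plus, exp_Ropp, exp_ln by lra. unfold q. field. lra. }
  assert (E2 : (1 - q) * exp (v - ln (1 - m)) = exp v / 2).
  { unfold Rminus. rewrite exp_plus, exp_Ropp, exp_ln by lra. unfold q. field. lra. }
  rewrite E1, E2 in W.
  eapply Rle_trans; [| replace ((exp u + exp v) / 2) with (exp u / 2 + exp v / 2) by field; exact W].
  apply exp_le_exp.
  pose proof (ln_taylor3 m ltac:(lra)) as L1.
  pose proof (ln_taylor3 (-m) ltac:(lra)) as L2.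
  replace (1 + - m) with (1 - m) in L2 by ring.
  assert (K1 : (1 + m) * ln (1 + m) <= (1 + m) * (m - m ^ 2 / 2 + m ^ 3 / 3)).
  { apply Rmult_le_compat_l; lra. }
  assert (K2 : (1 - m) * ln (1 - m) <= (1 - m) * (- m - (- m) ^ 2 / 2 + (- m) ^ 3 / 3)).
  { apply Rmult_le_compat_l; lra. }
  unfold q.
  assert (E : (1 + m) * (m - m ^ 2 / 2 + m ^ 3 / 3) + (1 - m) * (- m - (- m) ^ 2 / 2 + (- m) ^ 3 / 3)
     = m ^ 2 + 2 * m ^ 4 / 3) by field.
  assert (E' : (1 + m) / 2 * (u - ln (1 + m)) + (1 - (1 + m) / 2) * (v - ln (1 - m))
     = (1 + m) / 2 * u + (1 - m) / 2 * v - ((1 + m) * ln (1 + m) + (1 - m) * ln (1 - m)) / 2) by field.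
  rewrite E'. lra.
Qed.

Section LB.
Variable sp : R.
Hypothesis Hsp : 0 < sp < 1.
Let mu := (1 - sp ^ 2) / 8.
Let ga := (1 - sp) / 2.
Let al := (1 - sp) / 4.

Fixpoint lD (t m : nat) : R :=
  match m with
  | O => 0
  | S m' => lD (S t) m' * (1 + 4 * ga / INR (S t)) + ga ^ 4 / (3 * INR (S t) ^ 4)
  end.

Fixpoint lA (t m : nat) : R :=
  match m with
  | O => 0
  | S m' => (mu / INR (S t) ^ 2 + lA (S t) m') * (1 + 2 * ga / INR (S t))
            - lD (S t) m' * (6 + 4 * ga / INR (S t)) - ga ^ 2 / (2 * INR (S t) ^ 2)
  end.

Fixpoint lB (t m : nat) : R :=
  match m with
  | O => 0
  | S m' => lB (S t) m' + (mu / INR (S t) ^ 2 + lA (S t) m') - lD (S t) m'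
  end.

Lemma Mg_lower : forall m s t, - INR t <= s <= INR t ->
  exp (lA t m * s ^ 2 - lD t m * s ^ 4 + lB t m) <= Mg mu s t m.
Proof.
  induction m as [|m IH]; intros s t Hs.
  - rewrite Mg_0. cbn [lA lD lB]. replace (0 * s ^ 2 - 0 * s ^ 4 + 0) with 0 by ring. rewrite exp_0. lra.
  - rewrite Mg_S. cbn [lA lD lB].
    set (T := INR (S t)).
    assert (HT : T = INR t + 1) by (unfold T; apply S_INR).
    assert (Ht0 : 0 <= INR t) by apply pos_INR.
    assert (HT0 : 0 < T) by lra.
    set (A' := lA (S t) m). set (D' := lD (S t) m). set (B' := lB (S t) m).
    set (P := mu / T ^ 2 + A').
    set (u := P * (s + 1) ^ 2 - D' * (s + 1) ^ 4 + B').
    set (v := P * (s + -1) ^ 2 - D' * (s + -1) ^ 4 + B').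
    assert (Hu : exp u <= exp (mu * ((s + 1) ^ 2 / T ^ 2)) * Mg mu (s + 1) (S t) m).
    { eapply Rle_trans; [| apply Rmult_le_compat_l; [left; apply exp_pos | apply IH]].
      - rewrite <- exp_plus. apply exp_le_exp. unfold u, P, A', D', B'. apply Req_le. field. lra.
      - fold T. rewrite HT. lra. }
    assert (Hv : exp v <= exp (mu * ((s + -1) ^ 2 / T ^ 2)) * Mg mu (s + -1) (S t) m).
    { eapply Rle_trans; [| apply Rmult_le_compat_l; [left; apply exp_pos | apply IH]].
      - rewrite <- exp_plus. apply exp_le_exp. unfold v, P, A', D', B'. apply Req_le. field. lra.
      - fold T. rewrite HT. lra. }
    set (mm := ga * s / T).
    assert (Hga : 0 < ga < 1/2) by (unfold ga; lra).
    assert (Hmm : -1 < mm < 1).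
    { unfold mm.
      split.
      - apply Rmult_lt_reg_r with T; auto. unfold Rdiv. rewrite Rmult_assoc, Rinv_l by lra. nra.
      - apply Rmult_lt_reg_r with T; auto. unfold Rdiv. rewrite Rmult_assoc, Rinv_l by lra. nra. }
    pose proof (gibbs2 u v mm Hmm) as G.
    eapply Rle_trans; [| eapply Rle_trans; [apply G|]].
    + apply exp_le_exp. apply Req_le. unfold u, v, mm, P. field. lra.
    + lra.
Qed.

Lemma lD_bound : forall m t, (1 <= t)%nat -> 0 <= lD t m <= 1 / INR t ^ 3.
Proof.
  induction m as [|m IH]; intros t Ht.
  - cbn [lD]. split; [lra|]. apply Rdiv_le_0_compat; [lra|]. apply pow_lt. apply lt_0_INR; lia.
  - cbn [lD]. destruct (IH (S t) ltac:(lia)) as [Hl Hu].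
    assert (HT : INR (S t) = INR t + 1) by apply S_INR.
    assert (Ht1 : 1 <= INR t) by (apply (le_INR 1); lia).
    set (T := INR (S t)) in *. set (x := INR t) in *.
    set (D' := lD (S t) m) in *.
    assert (Hga : 0 < ga < 1/2) by (unfold ga; lra).
    assert (HT0 : 0 < T) by lra.
    assert (Hc : 0 < 1 + 4 * ga / T) by (assert (0 < ga / T) by (apply Rdiv_lt_0_compat; lra); lra).
    assert (Hg4 : 0 <= ga ^ 4 / (3 * T ^ 4)) by (apply Rdiv_le_0_compat; [nra| apply Rmult_lt_0_compat; [lra| apply pow_lt; lra]]).
    split; [nra|].
    assert (H1 : D' * (1 + 4 * ga / T) <= 1 / T ^ 3 * (1 + 4 * ga / T)) by (apply Rmult_le_compat_r; lra).
    assert (E : 1 / x ^ 3 - (1 / T ^ 3 * (1 + 4 * ga / T) + ga ^ 4 / (3 * T ^ 4))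
       = (3 * T^4 - x^3 * (3 * T + 12 * ga + ga^4)) / (3 * x^3 * T^4)).
    { field. lra. }
    assert (0 <= 3 * T^4 - x^3 * (3 * T + 12 * ga + ga^4)).
    { rewrite HT. assert (Hg2 : 0 <= ga^2 <= 1/4) by (split; nra).
      assert (ga ^ 4 <= 1/16) by (replace (ga^4) with (ga^2*ga^2) by ring; nra).
      assert (0 <= x^3 * (9 - 12 * ga - ga^4)) by (apply Rmult_le_pos; nra).
      replace (3 * (x + 1) ^ 4 - x ^ 3 * (3 * (x + 1) + 12 * ga + ga ^ 4))
        with (3 * (6 * x^2 + 4 * x + 1) + x^3 * (9 - 12 * ga - ga^4)) by ring.
      nra. }
    assert (0 <= (3 * T^4 - x^3 * (3 * T + 12 * ga + ga^4)) / (3 * x^3 * T^4)).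
    { apply Rdiv_le_0_compat; auto. assert (0 < x^3) by (apply pow_lt; lra).
      assert (0 < T^4) by (apply pow_lt; lra). nra. }
    lra.
Qed.

Fixpoint prodf (t m : nat) : R :=
  match m with
  | O => 1
  | S m' => (1 + 2 * ga / INR (S t)) * prodf (S t) m'
  end.

Lemma prodf_pos : forall m t, 0 < prodf t m.
Proof.
  induction m as [|m IH]; intros t; cbn [prodf]; [lra|].
  apply Rmult_lt_0_compat; auto.
  assert (0 < 2 * ga / INR (S t)).
  { apply Rdiv_lt_0_compat. unfold ga; lra. apply lt_0_INR; lia. }
  lra.
Qed.

Lemma prodf_le_ratio : forall m t, (1 <= t)%nat -> prodf t m <= INR (t + m) / INR t.
Proof.
  induction m as [|m IH]; intros t Ht; cbn [prodf].
  - rewrite Nat.add_0_r. right. field. apply not_0_INR; lia.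
  - specialize (IH (S t) ltac:(lia)). replace (S t + m)%nat with (t + S m)%nat in IH by lia.
    assert (HT : INR (S t) = INR t + 1) by apply S_INR.
    assert (Ht1 : 1 <= INR t) by (apply (le_INR 1); lia).
    assert (Hga : 0 < ga < 1/2) by (unfold ga; lra).
    assert (H1 : 1 + 2 * ga / INR (S t) <= INR (S t) / INR t).
    { rewrite HT. apply Rle_trans with (1 + 1 / INR t).
      - assert (2 * ga / (INR t + 1) <= 1 / INR t).
        { apply Rle_trans with (1 / (INR t + 1)).
          - unfold Rdiv. apply Rmult_le_compat_r. left; apply Rinv_0_lt_compat; lra. lra.
          - unfold Rdiv. rewrite !Rmult_1_l. apply Rinv_le_contravar; lra. }
        lra.
      - right. field. lra. }
    pose proof (prodf_pos m (S t)).
    eapply Rle_trans. apply Rmult_le_compat_r; [lra| exact H1].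
    eapply Rle_trans. apply Rmult_le_compat_l; [| exact IH].
    apply Rdiv_le_0_compat; [apply pos_INR| apply lt_0_INR; lia].
    right. field. split; [apply not_0_INR; lia| lra].
Qed.

Lemma prodf_le_exp : forall m t, (1 <= t)%nat ->
  prodf t m <= exp (2 * ga * (ln (INR (t + m)) - ln (INR t))).
Proof.
  induction m as [|m IH]; intros t Ht; cbn [prodf].
  - rewrite Nat.add_0_r. replace (2 * ga * (ln (INR t) - ln (INR t))) with 0 by ring.
    rewrite exp_0. lra.
  - specialize (IH (S t) ltac:(lia)). replace (S t + m)%nat with (t + S m)%nat in IH by lia.
    assert (HT : INR (S t) = INR t + 1) by apply S_INR.
    assert (Ht1 : 1 <= INR t) by (apply (le_INR 1); lia).
    assert (Hga : 0 < ga < 1/2) by (unfold ga; lra).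
    assert (Hl : / INR (S t) <= ln (INR (S t)) - ln (INR t)) by (rewrite HT; apply inv_le_ln; lra).
    assert (H1 : 1 + 2 * ga / INR (S t) <= exp (2 * ga * (ln (INR (S t)) - ln (INR t)))).
    { eapply Rle_trans. 2: apply exp_le_exp. apply exp_ineq1_le.
      unfold Rdiv. apply Rmult_le_compat_l; lra. }
    pose proof (prodf_pos m (S t)).
    eapply Rle_trans. apply Rmult_le_compat_r; [lra| exact H1].
    eapply Rle_trans. apply Rmult_le_compat_l; [left; apply exp_pos| exact IH].
    rewrite <- exp_plus. apply exp_le_exp. right. ring.
Qed.

Variable eta : R.
Hypothesis Heta : 0 < eta <= al / 2.
Variable t0 : nat.
Hypothesis Ht0 : (1 <= t0)%nat.
Hypothesis Ht0big : 9 <= eta * sp * INR t0.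
Let a := al - eta.

Lemma lA_good : forall m t, (t0 <= t)%nat ->
  a / INR t - a / INR (t + m) * prodf t m <= lA t m.
Proof.
  induction m as [|m IH]; intros t Ht.
  - cbn [lA prodf]. rewrite Nat.add_0_r. right. field. apply not_0_INR; lia.
  - cbn [lA prodf]. specialize (IH (S t) ltac:(lia)).
    replace (S t + m)%nat with (t + S m)%nat in IH by lia.
    destruct (lD_bound m (S t) ltac:(lia)) as [HD0 HD1].
    assert (HT : INR (S t) = INR t + 1) by apply S_INR.
    assert (Ht0r : INR t0 <= INR t) by (apply le_INR; lia).
    assert (Ht1 : 1 <= INR t0) by (apply (le_INR 1); lia).
    assert (Hga : 0 < ga < 1/2) by (unfold ga; lra).
    set (T := INR (S t)) in *. set (x := INR t) in *.
    set (n := INR (t + S m)) in *.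
    assert (Hn : 0 < n) by (apply lt_0_INR; lia).
    set (pf := prodf (S t) m) in *.
    set (A' := lA (S t) m) in *. set (D' := lD (S t) m) in *.
    assert (Hc : 0 < 1 + 2 * ga / T) by (assert (0 < ga / T) by (apply Rdiv_lt_0_compat; lra); lra).
    assert (Hmu : 0 <= mu) by (unfold mu; nra).
    assert (HT2 : 0 < T) by lra.
    assert (S1 : (mu / T ^ 2 + (a / T - a / n * pf)) * (1 + 2 * ga / T)
                 <= (mu / T ^ 2 + A') * (1 + 2 * ga / T)) by (apply Rmult_le_compat_r; lra).
    assert (S2 : D' * (6 + 4 * ga / T) <= 1 / T ^ 3 * (6 + 4 * ga / T)).
    { apply Rmult_le_compat_r; auto. assert (0 < ga / T) by (apply Rdiv_lt_0_compat; lra). lra. }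
    assert (Key : a / x <= (mu / T ^ 2 + a / T) * (1 + 2 * ga / T) - 1 / T ^ 3 * (6 + 4 * ga / T)
                          - ga ^ 2 / (2 * T ^ 2)).
    { assert (E : (mu / T ^ 2 + a / T) * (1 + 2 * ga / T) - 1 / T ^ 3 * (6 + 4 * ga / T)
                   - ga ^ 2 / (2 * T ^ 2) - a / x
                  = (eta * sp + 2 * ga * mu / T - a / x - (6 + 4 * ga / T) / T) / T ^ 2).
      { rewrite HT. unfold a, mu, ga, al. field. split; lra. }
      assert (0 <= eta * sp + 2 * ga * mu / T - a / x - (6 + 4 * ga / T) / T).
      { assert (Ha : 0 <= a <= 1) by (unfold a; unfold al in *; lra).
        assert (0 <= 2 * ga * mu / T) by (apply Rdiv_le_0_compat; [nra| lra]).
        assert (a / x <= 1 / x) by (unfold Rdiv; apply Rmult_le_compat_r; [left; apply Rinv_0_lt_compat; lra| lra]).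
        assert ((6 + 4 * ga / T) / T <= 8 / x).
        { assert (ga / T <= 1/2) by (apply Rle_trans with (ga / 1); [unfold Rdiv; apply Rmult_le_compat_l; [lra| apply Rinv_le_contravar; lra]| lra]).
          apply Rle_trans with (8 / T). unfold Rdiv; apply Rmult_le_compat_r; [left; apply Rinv_0_lt_compat; lra| lra].
          unfold Rdiv; apply Rmult_le_compat_l; [lra| apply Rinv_le_contravar; lra]. }
        assert (9 / x <= eta * sp).
        { assert (eta * sp * INR t0 <= eta * sp * x) by (apply Rmult_le_compat_l; nra).
          apply Rmult_le_reg_r with x; [lra|]. unfold Rdiv. rewrite Rmult_assoc, Rinv_l by lra. lra. }
        assert (1 / x + 8 / x = 9 / x) by (field; lra).
        lra. }
      assert (0 <= (eta * sp + 2 * ga * mu / T - a / x - (6 + 4 * ga / T) / T) / T ^ 2).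
      { apply Rdiv_le_0_compat; auto. apply pow_lt; lra. }
      lra. }
    assert (E2 : a / n * pf * (1 + 2 * ga / T) = a / n * ((1 + 2 * ga / T) * pf)) by ring.
    assert (E3 : (mu / T ^ 2 + (a / T - a / n * pf)) * (1 + 2 * ga / T)
                  = (mu / T ^ 2 + a / T) * (1 + 2 * ga / T) - a / n * ((1 + 2 * ga / T) * pf)) by ring.
    lra.
Qed.

Lemma a_bounds : 0 <= a <= 1.
Proof. unfold a; unfold al in *; lra. Qed.

Lemma lA_nonneg : forall m t, (t0 <= t)%nat -> 0 <= lA t m.
Proof.
  intros m t Ht. eapply Rle_trans; [| apply lA_good; auto].
  assert (Ht1 : 1 <= INR t) by (apply (le_INR 1); lia).
  pose proof (prodf_le_ratio m t ltac:(lia)) as Hp.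
  pose proof a_bounds as Ha.
  assert (Hn : 0 < INR (t + m)) by (apply lt_0_INR; lia).
  assert (a / INR (t + m) * prodf t m <= a / INR (t + m) * (INR (t + m) / INR t)).
  { apply Rmult_le_compat_l; auto. apply Rdiv_le_0_compat; lra. }
  replace (a / INR (t + m) * (INR (t + m) / INR t)) with (a / INR t) in H by (field; lra).
  lra.
Qed.

Lemma lA_small : forall j t m, (1 <= t)%nat -> (t + j = t0)%nat ->
  - (10 * 2 ^ j - 9) <= lA t m.
Proof.
  induction j as [|j IH]; intros t m Ht Htj.
  - simpl. pose proof (lA_nonneg m t ltac:(lia)). lra.
  - assert (1 <= 2 ^ j) by (apply pow_R1_Rle; lra).
    destruct m as [|m]; [cbn [lA]; simpl pow; lra|].
    cbn [lA]. specialize (IH (S t) m ltac:(lia) ltac:(lia)).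
    destruct (lD_bound m (S t) ltac:(lia)) as [HD0 HD1].
    assert (HT : 1 <= INR (S t)) by (apply (le_INR 1); lia).
    set (T := INR (S t)) in *.
    set (A' := lA (S t) m) in *. set (D' := lD (S t) m) in *.
    assert (Hga : 0 < ga < 1/2) by (unfold ga; lra).
    assert (Hmu : 0 <= mu) by (unfold mu; nra).
    assert (Hq : 0 <= ga / T <= 1/2).
    { split. apply Rdiv_le_0_compat; lra.
      apply Rle_trans with (ga / 1); [unfold Rdiv; apply Rmult_le_compat_l; [lra| apply Rinv_le_contravar; lra]| lra]. }
    assert (Hm2 : 0 <= mu / T ^ 2) by (apply Rdiv_le_0_compat; [lra| apply pow_lt; lra]).
    assert (HD2 : 1 / T ^ 3 <= 1).
    { assert (1 <= T ^ 3) by (apply pow_R1_Rle; lra).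
      unfold Rdiv. rewrite Rmult_1_l. rewrite <- Rinv_1. apply Rinv_le_contravar; lra. }
    assert (HD3 : D' * (6 + 4 * ga / T) <= 8) by nra.
    assert (Hg3 : ga ^ 2 / (2 * T ^ 2) <= 1).
    { assert (1 <= T ^ 2) by (apply pow_R1_Rle; lra).
      apply Rle_trans with (ga ^ 2 / 2). unfold Rdiv. apply Rmult_le_compat_l. nra.
      apply Rinv_le_contravar; lra. nra. }
    assert (HP : - 2 * (10 * 2 ^ j - 9) <= (mu / T ^ 2 + A') * (1 + 2 * ga / T)).
    { destruct (Rle_dec 0 (mu / T ^ 2 + A')).
      - assert (0 <= 10 * 2 ^ j - 9).
        { assert (1 <= 2 ^ j) by (apply pow_R1_Rle; lra). lra. }
        assert (0 <= (mu / T ^ 2 + A') * (1 + 2 * ga / T)) by (apply Rmult_le_pos; lra). lra.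
      - nra. }
    change (2 ^ S j) with (2 * 2 ^ j). lra.
Qed.

Variable eps : R.
Hypothesis Heps : 0 < eps < 1.
Let Y := exp (2 * ga * (ln (/ eps) / (1 - 2 * ga))).

Lemma e_bound : forall m t, (1 <= t)%nat ->
  a / INR (t + m) * prodf t m <= eps / INR t + Y / INR (t + m).
Proof.
  intros m t Ht.
  assert (Ht1 : 1 <= INR t) by (apply (le_INR 1); lia).
  assert (Htm : INR t <= INR (t + m)) by (apply le_INR; lia).
  set (n := INR (t + m)) in *. set (x := INR t) in *.
  pose proof (prodf_le_exp m t Ht) as Hp. fold n x in Hp.
  rewrite ln_ratio in Hp by lra.
  assert (Hga : 0 < ga < 1/2) by (unfold ga; lra).
  pose proof (young (2 * ga) (n / x) eps) as Hy.
  assert (1 <= n / x).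
  { apply Rmult_le_reg_r with x; [lra|]. unfold Rdiv. rewrite Rmult_assoc, Rinv_l by lra. lra. }
  specialize (Hy H ltac:(lra) Heps). fold Y in Hy.
  pose proof a_bounds as Ha.
  assert (Hn : 0 < n) by lra.
  assert (a / n * prodf t m <= a / n * (eps * (n / x) + Y)).
  { apply Rmult_le_compat_l. apply Rdiv_le_0_compat; lra. lra. }
  replace (a / n * (eps * (n / x) + Y)) with (a * (eps / x) + a * (Y / n)) in H0 by (field; lra).
  assert (0 <= eps / x) by (apply Rdiv_le_0_compat; lra).
  assert (0 <= Y / n) by (apply Rdiv_le_0_compat; [left; apply exp_pos| lra]).
  nra.
Qed.

Lemma lB_good : forall m t, (t0 <= t)%nat ->
  a * (ln (INR (t + m) + 1) - ln (INR t + 1)) - eps * (ln (INR (t + m)) - ln (INR t))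
  - / INR t - Y * INR m / INR (t + m) <= lB t m.
Proof.
  induction m as [|m IH]; intros t Ht.
  - cbn [lB]. rewrite Nat.add_0_r. change (INR 0) with 0.
    assert (0 < / INR t) by (apply Rinv_0_lt_compat; apply lt_0_INR; lia). 
    replace (Y * 0 / INR t) with 0 by (field; apply not_0_INR; lia).
    replace (ln (INR t + 1) - ln (INR t + 1)) with 0 by ring.
    replace (ln (INR t) - ln (INR t)) with 0 by ring. lra.
  - cbn [lB]. specialize (IH (S t) ltac:(lia)).
    replace (S t + m)%nat with (t + S m)%nat in IH by lia.
    pose proof (lA_good m (S t) ltac:(lia)) as HA.
    replace (S t + m)%nat with (t + S m)%nat in HA by lia.
    pose proof (e_bound m (S t) ltac:(lia)) as HE.
    replace (S t + m)%nat with (t + S m)%nat in HE by lia.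
    destruct (lD_bound m (S t) ltac:(lia)) as [HD0 HD1].
    assert (HT : INR (S t) = INR t + 1) by apply S_INR.
    assert (Ht1 : 1 <= INR t) by (apply (le_INR 1); lia).
    assert (HSm : INR (S m) = INR m + 1) by apply S_INR.
    assert (Hn : INR (S t) <= INR (t + S m)) by (apply le_INR; lia).
    set (T := INR (S t)) in *. set (x := INR t) in *. set (n := INR (t + S m)) in *.
    assert (Hmu : 0 <= mu) by (unfold mu; nra).
    assert (Hm2 : 0 <= mu / T ^ 2) by (apply Rdiv_le_0_compat; [lra| apply pow_lt; lra]).
    pose proof a_bounds as Ha.
    assert (L1 : ln (T + 1) - ln T <= / T) by (apply ln_le_inv; lra).
    assert (L2 : / T <= ln T - ln x) by (rewrite HT; apply inv_le_ln; lra).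
    assert (L3 : / T + 1 / T ^ 3 <= / x).
    { rewrite HT. assert (E : / x - (/ (x + 1) + 1 / (x + 1) ^ 3) = (x^2 + x + 1) / (x * (x+1)^3))
        by (field; lra).
      assert (0 <= (x^2 + x + 1) / (x * (x+1)^3)).
      { apply Rdiv_le_0_compat. nra. apply Rmult_lt_0_compat; [lra| apply pow_lt; lra]. }
      lra. }
    assert (aL1 : a * (ln (T + 1) - ln T) <= a / T) by (unfold Rdiv; apply Rmult_le_compat_l; lra).
    assert (eL2 : eps / T <= eps * (ln T - ln x)) by (unfold Rdiv; apply Rmult_le_compat_l; lra).
    assert (EY : Y * INR (S m) / n = Y * INR m / n + Y / n) by (rewrite HSm; field; lra).
    rewrite <- HT. lra.
Qed.

Lemma lB_small : forall j t m, (t + j = t0)%nat ->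
  lB t0 m - INR j * (10 * 2 ^ t0 + 2) <= lB t (j + m).
Proof.
  induction j as [|j IH]; intros t m Htj.
  - replace t with t0 by lia. simpl INR. rewrite Rmult_0_l, Rminus_0_r. simpl plus. lra.
  - simpl plus. cbn [lB]. specialize (IH (S t) m ltac:(lia)).
    pose proof (lA_small j (S t) (j + m) ltac:(lia) ltac:(lia)) as HA.
    destruct (lD_bound (j + m) (S t) ltac:(lia)) as [HD0 HD1].
    assert (HT : 1 <= INR (S t)) by (apply (le_INR 1); lia).
    assert (H3 : 1 / INR (S t) ^ 3 <= 1).
    { assert (1 <= INR (S t) ^ 3) by (apply pow_R1_Rle; lra).
      unfold Rdiv. rewrite Rmult_1_l. rewrite <- Rinv_1. apply Rinv_le_contravar; lra. }
    assert (Hmu : 0 <= mu) by (unfold mu; nra).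
    assert (Hm2 : 0 <= mu / INR (S t) ^ 2) by (apply Rdiv_le_0_compat; [lra| apply pow_lt; lra]).
    assert (Hp : 2 ^ j <= 2 ^ t0) by (apply Rle_pow; [lra| lia]).
    rewrite S_INR. lra.
Qed.

Lemma mgf_lower_core n : (t0 <= n)%nat ->
  exp ((a - eps) * ln (INR n) - (a * ln (INR t0 + 1) + 1 + Y + INR t0 * (10 * 2 ^ t0 + 2)))
  <= Ex n (fun xs => exp (mu * Lsum xs)).
Proof.
  intro Hn. rewrite <- Mg_Lsum. eapply Rle_trans; [| apply Mg_lower; simpl; lra].
  apply exp_le_exp. replace (0 ^ 2) with 0 by ring. replace (0 ^ 4) with 0 by ring.
  destruct (Nat.le_exists_sub t0 n Hn) as [m [Hm _]].
  pose proof (lB_small t0 0 m ltac:(lia)) as H1.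
  pose proof (lB_good m t0 (le_n _)) as H2.
  replace (t0 + m)%nat with n in * by lia. subst n.
  replace (m + t0)%nat with (t0 + m)%nat in * by lia.
  set (n := INR (t0 + m)) in *.
  assert (Ht1 : 1 <= INR t0) by (apply (le_INR 1); lia).
  assert (Hmn : INR m <= n) by (apply le_INR; lia).
  assert (Hn1 : INR t0 <= n) by (apply le_INR; lia).
  assert (L1 : ln n <= ln (n + 1)) by (apply ln_le_mono; lra).
  assert (L2 : 0 <= ln (INR t0)) by (rewrite <- ln_1; apply ln_le_mono; lra).
  assert (HY : 0 < Y) by apply exp_pos.
  assert (Hm : Y * INR m / n <= Y).
  { apply Rmult_le_reg_r with n; [lra|]. unfold Rdiv. rewrite Rmult_assoc, Rinv_l by lra. nra. }
  assert (Hi : / INR t0 <= 1) by (rewrite <- Rinv_1; apply Rinv_le_contravar; lra).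
  pose proof a_bounds as Ha.
  assert (a * ln n <= a * ln (n + 1)) by (apply Rmult_le_compat_l; lra).
  assert (0 <= eps * ln (INR t0)) by (apply Rmult_le_pos; lra).
  lra.
Qed.
End LB.

Lemma mgf_lower sp : 0 < sp < 1 -> forall d, 0 < d -> exists C N, forall n, (N <= n)%nat ->
  exp (((1 - sp) / 4 - d) * ln (INR n) - C) <= Ex n (fun xs => exp ((1 - sp ^ 2) / 8 * Lsum xs)).
Proof.
  intros Hsp d Hd.
  set (al := (1 - sp) / 4).
  set (eta := Rmin d al / 2).
  set (eps := Rmin d 1 / 2).
  assert (Heta : 0 < eta <= al / 2).
  { unfold eta. assert (0 < al) by (unfold al; lra). pose proof (Rmin_r d al). 
    assert (0 < Rmin d al) by (apply Rmin_pos; lra). lra. }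
  assert (Heps : 0 < eps < 1).
  { unfold eps. pose proof (Rmin_r d 1). assert (0 < Rmin d 1) by (apply Rmin_pos; lra). lra. }
  destruct (exists_nat_gt (9 / (eta * sp))) as [k Hk].
  set (t0 := max 1 k).
  assert (Ht0 : (1 <= t0)%nat) by lia.
  assert (Ht0big : 9 <= eta * sp * INR t0).
  { assert (INR k <= INR t0) by (apply le_INR; lia).
    assert (0 < eta * sp) by (apply Rmult_lt_0_compat; lra).
    assert (9 / (eta * sp) * (eta * sp) = 9) by (field; lra). nra. }
  eexists. exists t0. intros n Hn.
  eapply Rle_trans; [| apply (mgf_lower_core sp Hsp eta Heta t0 Ht0 Ht0big eps Heps n Hn)].
  apply exp_le_exp.
  assert (Hln : 0 <= ln (INR n)).
  { rewrite <- ln_1. apply ln_le_mono; [lra|]. apply (le_INR 1). lia. }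
  assert (al - eta - eps >= al - d).
  { unfold eta, eps. pose proof (Rmin_l d al). pose proof (Rmin_l d 1). lra. }
  assert ((al - eta - eps) * ln (INR n) >= (al - d) * ln (INR n)) by nra.
  unfold al in *. apply Rplus_le_compat_r. lra.
Qed.

Definition ind (a x : R) : R := if Rle_dec a x then 1 else 0.

Lemma prob_ind c n : prob_L c n = Ex n (fun xs => ind (c * ln (INR n)) (Lsum xs)).
Proof. rewrite prob_L_Ex. reflexivity. Qed.

Lemma ind_markov a x lam : 0 <= lam -> ind a x <= exp (lam * (x - a)).
Proof.
  intro H. unfold ind. destruct Rle_dec.
  - rewrite <- exp_0. apply exp_le_exp. nra.
  - left. apply exp_pos.
Qed.

Lemma ind_nonneg a x : 0 <= ind a x.
Proof. unfold ind; destruct Rle_dec; lra. Qed.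

Lemma Ex_nonneg m f : (forall xs, 0 <= f xs) -> 0 <= Ex m f.
Proof. intro H. rewrite <- (Ex_const m 0). apply Ex_le. auto. Qed.

Lemma ln_large X : exists N, forall n, (N <= n)%nat -> X <= ln (INR n) /\ 0 < INR n.
Proof.
  destruct (exists_nat_gt (exp X)) as [N HN]. exists (max 1 N). intros n Hn.
  assert (INR N <= INR n) by (apply le_INR; lia).
  pose proof (exp_pos X).
  split; [| lra].
  rewrite <- (ln_exp X). apply ln_le_mono; lra.
Qed.

Lemma Kc_id c : 1 <= c ->
  (1 - / c) / 4 - c * ((1 - (/ c) ^ 2) / 8) = - Kc c.
Proof. intro. unfold Kc. field. lra. Qed.

Lemma prob_upper c : 1 <= c -> forall n, (1 <= n)%nat ->
  prob_L c n <= exp (- Kc c * ln (INR n) + 1).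
Proof.
  intros Hc n Hn. rewrite prob_ind.
  set (sp := / c).
  assert (Hsp : 0 < sp <= 1).
  { unfold sp. split. apply Rinv_0_lt_compat; lra. rewrite <- Rinv_1. apply Rinv_le_contravar; lra. }
  set (lam := (1 - sp ^ 2) / 8).
  assert (Hlam : 0 <= lam <= 1/8) by (unfold lam; nra).
  eapply Rle_trans. apply Ex_le. intro xs. apply (ind_markov _ _ lam); lra.
  eapply Rle_trans. apply Req_le.
  apply (Ex_ext n _ (fun xs => exp (- (lam * (c * ln (INR n)))) * exp (lam * Lsum xs))).
  { intro xs. rewrite <- exp_plus. f_equal. ring. }
  rewrite Ex_scal.
  eapply Rle_trans. apply Rmult_le_compat_l; [left; apply exp_pos| apply (mgf_upper sp Hsp n Hn)].
  rewrite <- exp_plus. apply exp_le_exp.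
  pose proof (Kc_id c Hc) as K. fold sp in K.
  assert (Hk : (1 - sp) / 4 + 2 * lam <= 1) by (unfold lam; nra).
  fold lam in K.
  assert (E : - (lam * (c * ln (INR n))) + ((1 - sp) / 4 * ln (INR n) + (1 - sp) / 4 + 2 * lam)
      = ((1 - sp) / 4 - c * lam) * ln (INR n) + ((1 - sp) / 4 + 2 * lam)) by ring.
  fold lam. rewrite E, K. lra.
Qed.

Lemma exp_minus_ln4 x : exp (x - ln 4) = exp x / 4.
Proof. unfold Rminus. rewrite exp_plus, exp_Ropp, exp_ln by lra. field. Qed.

Lemma exp_minus_ln2 x : exp (x - ln 2) = exp x / 2.
Proof. unfold Rminus. rewrite exp_plus, exp_Ropp, exp_ln by lra. field. Qed.

Lemma pointwise lam lam1 lam2 a b x : 0 <= lam1 <= lam -> lam <= lam2 -> a <= b ->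
  exp (lam * x) <= exp ((lam - lam1) * a) * exp (lam1 * x) + exp (lam * b) * ind a x
                   + exp (- ((lam2 - lam) * b)) * exp (lam2 * x).
Proof.
  intros H1 H2 Hab.
  pose proof (exp_pos ((lam - lam1) * a)). pose proof (exp_pos (lam1 * x)).
  pose proof (exp_pos (lam * b)). pose proof (exp_pos (- ((lam2 - lam) * b))).
  pose proof (exp_pos (lam2 * x)).
  assert (P1 : 0 <= exp ((lam - lam1) * a) * exp (lam1 * x)) by nra.
  assert (P3 : 0 <= exp (- ((lam2 - lam) * b)) * exp (lam2 * x)) by nra.
  pose proof (ind_nonneg a x).
  assert (P2 : 0 <= exp (lam * b) * ind a x) by nra.
  destruct (Rle_dec a x) as [Hax|Hax].
  - destruct (Rle_dec x b) as [Hxb|Hxb].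
    + unfold ind. destruct Rle_dec; [|lra].
      assert (exp (lam * x) <= exp (lam * b)) by (apply exp_le_exp; nra). lra.
    + assert (exp (lam * x) <= exp (- ((lam2 - lam) * b)) * exp (lam2 * x)).
      { rewrite <- exp_plus. apply exp_le_exp. nra. }
      lra.
  - assert (exp (lam * x) <= exp ((lam - lam1) * a) * exp (lam1 * x)).
    { rewrite <- exp_plus. apply exp_le_exp. nra. }
    lra.
Qed.

Lemma prob_lower_gt1 c : 1 < c -> forall d, 0 < d -> exists N, forall n, (N <= n)%nat ->
  exp ((- Kc c - d) * ln (INR n)) <= prob_L c n.
Proof.
  intros Hc d Hd.
  set (rho := Rmin d 1 / 4).
  assert (Hrho : 0 < rho <= d / 4).
  { unfold rho. pose proof (Rmin_l d 1). assert (0 < Rmin d 1) by (apply Rmin_pos; lra). lra. }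
  set (c1 := c + rho). set (c2 := c + 2 * rho).
  set (s0 := / c1). set (s1 := / c). set (s2 := / c2).
  assert (Hs0 : 0 < s0 < 1).
  { unfold s0. split. apply Rinv_0_lt_compat; unfold c1; lra.
    rewrite <- Rinv_1. apply Rinv_lt_contravar; unfold c1; lra. }
  assert (Hs1 : 0 < s1 <= 1).
  { unfold s1. split. apply Rinv_0_lt_compat; lra.
    rewrite <- Rinv_1. apply Rinv_le_contravar; lra. }
  assert (Hs2 : 0 < s2 <= 1).
  { unfold s2. split. apply Rinv_0_lt_compat; unfold c2; lra.
    rewrite <- Rinv_1. apply Rinv_le_contravar; unfold c2; lra. }
  assert (Hs01 : s0 < s1) by (unfold s0, s1; apply Rinv_lt_contravar; unfold c1; nra).
  assert (Hs20 : s2 < s0) by (unfold s0, s2; apply Rinv_lt_contravar; unfold c1, c2; nra).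
  assert (Hcs0 : c * s0 < 1).
  { unfold s0. replace (c * / c1) with (c / c1) by reflexivity.
    apply Rmult_lt_reg_r with c1; [unfold c1; lra|]. unfold Rdiv.
    rewrite Rmult_assoc, Rinv_l by (unfold c1; lra). unfold c1; lra. }
  assert (Hc2s0 : 1 < c2 * s0).
  { unfold s0. apply Rmult_lt_reg_r with c1; [unfold c1; lra|].
    rewrite Rmult_assoc, Rinv_l by (unfold c1; lra). unfold c1, c2; lra. }
  assert (Hcs1 : c * s1 = 1) by (unfold s1; field; lra).
  set (lam := (1 - s0 ^ 2) / 8). set (al := (1 - s0) / 4).
  set (lam1 := (1 - s1 ^ 2) / 8). set (L1 := (1 - s1) / 4).
  set (lam2 := (1 - s2 ^ 2) / 8). set (L2 := (1 - s2) / 4).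
  set (g1 := al - ((lam - lam1) * c + L1)).
  set (g2 := al + (lam2 - lam) * c2 - L2).
  assert (Eg1 : g1 = (s1 - s0) * (1 - c * s0) / 8).
  { unfold g1, al, lam, lam1, L1, s1. field. lra. }
  assert (Eg2 : g2 = (s0 - s2) * (c2 * s0 - 1) / 8).
  { unfold g2, al, lam, lam2, L2, s2. field. unfold c2; lra. }
  assert (Hg1 : 0 < g1) by (rewrite Eg1; apply Rdiv_lt_0_compat; [apply Rmult_lt_0_compat|]; lra).
  assert (Hg2 : 0 < g2) by (rewrite Eg2; apply Rdiv_lt_0_compat; [apply Rmult_lt_0_compat|]; lra).
  assert (HK : - Kc c - rho / 4 <= al - lam * c2).
  { rewrite <- (Kc_id c ltac:(lra)). fold s1.
    assert (c2 * s0 ^ 2 >= s0) by nra.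
    assert (c * s1 ^ 2 = s1) by (unfold s1; field; lra).
    unfold al, lam. unfold c2 in *. nra. }
  set (d' := Rmin (Rmin g1 g2) rho / 2).
  assert (Hd' : 0 < d' /\ d' <= g1 / 2 /\ d' <= g2 / 2 /\ d' <= rho / 2).
  { unfold d'. pose proof (Rmin_l (Rmin g1 g2) rho). pose proof (Rmin_r (Rmin g1 g2) rho).
    pose proof (Rmin_l g1 g2). pose proof (Rmin_r g1 g2).
    assert (0 < Rmin (Rmin g1 g2) rho) by (apply Rmin_pos; [apply Rmin_pos|]; lra). lra. }
  destruct (mgf_lower s0 Hs0 d' ltac:(lra)) as [C0 [N0 HL]].
  set (Q := 1 + Rabs C0 + ln 4).
  assert (HQ : 0 < Q /\ C0 + ln 4 + 1 <= Q /\ C0 + ln 2 <= Q).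
  { unfold Q. pose proof (Rle_abs C0). assert (0 < ln 4) by (rewrite <- ln_1; apply ln_increasing; lra).
    assert (ln 2 < ln 4) by (apply ln_increasing; lra). pose proof (Rabs_pos C0). lra. }
  destruct (ln_large (2 * Q / g1 + 2 * Q / g2 + 2 * Q / d)) as [N1 HN1].
  exists (max N0 (max 1 N1)). intros n Hn.
  destruct (HN1 n ltac:(lia)) as [HT Hn0].
  set (T := ln (INR n)) in *.
  assert (Hg1T : Q <= g1 / 2 * T).
  { assert (0 <= 2 * Q / g2) by (apply Rdiv_le_0_compat; lra).
    assert (0 <= 2 * Q / d) by (apply Rdiv_le_0_compat; lra).
    assert (2 * Q / g1 <= T) by lra.
    apply Rmult_le_compat_l with (r := g1 / 2) in H1; [|lra].
    replace (g1 / 2 * (2 * Q / g1)) with Q in H1 by (field; lra). lra. }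
  assert (Hg2T : Q <= g2 / 2 * T).
  { assert (0 <= 2 * Q / g1) by (apply Rdiv_le_0_compat; lra).
    assert (0 <= 2 * Q / d) by (apply Rdiv_le_0_compat; lra).
    assert (2 * Q / g2 <= T) by lra.
    apply Rmult_le_compat_l with (r := g2 / 2) in H1; [|lra].
    replace (g2 / 2 * (2 * Q / g2)) with Q in H1 by (field; lra). lra. }
  assert (HdT : Q <= d / 2 * T).
  { assert (0 <= 2 * Q / g1) by (apply Rdiv_le_0_compat; lra).
    assert (0 <= 2 * Q / g2) by (apply Rdiv_le_0_compat; lra).
    assert (2 * Q / d <= T) by lra.
    apply Rmult_le_compat_l with (r := d / 2) in H1; [|lra].
    replace (d / 2 * (2 * Q / d)) with Q in H1 by (field; lra). lra. }
  assert (HT0 : 0 <= T).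
  { assert (0 <= 2 * Q / g1) by (apply Rdiv_le_0_compat; lra).
    assert (0 <= 2 * Q / g2) by (apply Rdiv_le_0_compat; lra).
    assert (0 <= 2 * Q / d) by (apply Rdiv_le_0_compat; lra). lra. }
  assert (Hn1 : (1 <= n)%nat) by lia.
  specialize (HL n ltac:(lia)). fold T in HL. fold lam in HL.
  pose proof (mgf_upper s1 Hs1 n Hn1) as U1. fold T lam1 in U1.
  pose proof (mgf_upper s2 Hs2 n Hn1) as U2. fold T lam2 in U2.
  set (X0 := Ex n (fun xs => exp (lam * Lsum xs))) in *.
  set (X1 := Ex n (fun xs => exp (lam1 * Lsum xs))) in *.
  set (X2 := Ex n (fun xs => exp (lam2 * Lsum xs))) in *.
  rewrite prob_ind. fold T. set (P := Ex n (fun xs => ind (c * T) (Lsum xs))).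
  assert (Hlam : 0 <= lam1 <= lam /\ lam <= lam2) by (unfold lam, lam1, lam2; nra).
  assert (Hab : c * T <= c2 * T) by (unfold c2; nra).
  assert (Main : X0 <= exp ((lam - lam1) * (c * T)) * X1 + exp (lam * (c2 * T)) * P
                        + exp (- ((lam2 - lam) * (c2 * T))) * X2).
  { unfold X0, X1, X2, P. rewrite <- !Ex_scal, <- !Ex_plus. apply Ex_le. intro xs.
    apply pointwise; lra. }
  fold al in HL.
  set (B0 := exp ((al - d') * T - C0)) in *.
  assert (T1 : exp ((lam - lam1) * (c * T)) * X1 <= B0 / 4).
  { eapply Rle_trans. apply Rmult_le_compat_l; [left; apply exp_pos| exact U1].
    rewrite <- exp_plus. unfold B0. rewrite <- exp_minus_ln4. apply exp_le_exp.
    assert (E : (lam - lam1) * (c * T) + ((1 - s1) / 4 * T + (1 - s1) / 4 + 2 * lam1)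
                = (al - g1) * T + (L1 + 2 * lam1)) by (unfold g1, L1; ring).
    rewrite E. assert (L1 + 2 * lam1 <= 1) by (unfold L1, lam1; nra).
    assert (d' * T <= g1 / 2 * T) by (apply Rmult_le_compat_r; lra). lra. }
  assert (T2 : exp (- ((lam2 - lam) * (c2 * T))) * X2 <= B0 / 4).
  { eapply Rle_trans. apply Rmult_le_compat_l; [left; apply exp_pos| exact U2].
    rewrite <- exp_plus. unfold B0. rewrite <- exp_minus_ln4. apply exp_le_exp.
    assert (E : - ((lam2 - lam) * (c2 * T)) + ((1 - s2) / 4 * T + (1 - s2) / 4 + 2 * lam2)
                = (al - g2) * T + (L2 + 2 * lam2)) by (unfold g2, L2; ring).
    rewrite E. assert (L2 + 2 * lam2 <= 1) by (unfold L2, lam2; nra).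
    assert (d' * T <= g2 / 2 * T) by (apply Rmult_le_compat_r; lra). lra. }
  assert (HPB : B0 / 2 <= exp (lam * (c2 * T)) * P) by lra.
  assert (HP : exp (- (lam * (c2 * T))) * (B0 / 2) <= P).
  { apply Rmult_le_compat_l with (r := exp (- (lam * (c2 * T)))) in HPB; [|left; apply exp_pos].
    assert (E : exp (- (lam * (c2 * T))) * (exp (lam * (c2 * T)) * P) = P).
    { rewrite <- Rmult_assoc, <- exp_plus, Rplus_opp_l, exp_0. ring. }
    rewrite E in HPB. exact HPB. }
  eapply Rle_trans; [| exact HP].
  unfold B0. rewrite <- exp_minus_ln2, <- exp_plus. apply exp_le_exp.
  assert (d' * T <= rho / 2 * T) by (apply Rmult_le_compat_r; lra).
  assert ((- Kc c - rho / 4) * T <= (al - lam * c2) * T) by (apply Rmult_le_compat_r; lra).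
  assert (rho * T <= d / 4 * T) by (apply Rmult_le_compat_r; lra).
  lra.
Qed.

Lemma prob_mono c c' n : c <= c' -> 0 <= ln (INR n) -> prob_L c' n <= prob_L c n.
Proof.
  intros H Hn. rewrite !prob_ind. apply Ex_le. intro xs. unfold ind.
  destruct (Rle_dec (c' * ln (INR n)) (Lsum xs)); destruct (Rle_dec (c * ln (INR n)) (Lsum xs)); try lra.
  exfalso. apply n0. assert (c * ln (INR n) <= c' * ln (INR n)) by (apply Rmult_le_compat_r; lra). lra.
Qed.

Lemma prob_bounds c : 1 <= c -> forall d, 0 < d -> exists N, forall n, (N <= n)%nat ->
  exp ((- Kc c - d) * ln (INR n)) <= prob_L c n <= exp ((- Kc c + d) * ln (INR n)).
Proof.
  intros Hc d Hd.
  assert (Hlow : exists N, forall n, (N <= n)%nat -> exp ((- Kc c - d) * ln (INR n)) <= prob_L c n).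
  { destruct (Rle_lt_or_eq_dec 1 c Hc) as [Hc1|Hc1].
    - apply prob_lower_gt1; auto.
    - subst c. set (rho := Rmin d 1 / 2).
      assert (Hrho : 0 < rho <= 1/2 /\ rho <= d / 2).
      { unfold rho. pose proof (Rmin_l d 1). pose proof (Rmin_r d 1).
        assert (0 < Rmin d 1) by (apply Rmin_pos; lra). lra. }
      destruct (prob_lower_gt1 (1 + rho) ltac:(lra) (d / 2) ltac:(lra)) as [N1 HN1].
      destruct (ln_large 0) as [N2 HN2].
      exists (max N1 N2). intros n Hn.
      destruct (HN2 n ltac:(lia)) as [HT _].
      eapply Rle_trans; [| apply (prob_mono 1 (1 + rho)); lra].
      eapply Rle_trans; [| apply HN1; lia].
      apply exp_le_exp. apply Rmult_le_compat_r; auto.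
      assert (Kc 1 = 0) by (unfold Kc; field).
      assert (Kc (1 + rho) <= d / 2).
      { unfold Kc. replace ((1 - (1 + rho)) ^ 2) with (rho ^ 2) by ring.
        apply Rle_trans with (rho ^ 2 / 8).
        - unfold Rdiv. apply Rmult_le_compat_l; [nra|]. apply Rinv_le_contravar; lra.
        - nra. }
      lra. }
  destruct Hlow as [N1 HN1].
  destruct (ln_large (1 / d)) as [N2 HN2].
  exists (max N1 N2). intros n Hn. split; [apply HN1; lia|].
  destruct (HN2 n ltac:(lia)) as [HT Hn0].
  eapply Rle_trans. apply prob_upper; auto. apply (le_INR 1) in Hn0 || idtac.
  { apply INR_lt in Hn0 || idtac. destruct n; [simpl in Hn0; lra| lia]. }
  apply exp_le_exp.
  assert (1 <= d * ln (INR n)).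
  { apply Rmult_le_compat_l with (r := d) in HT; [|lra]. replace (d * (1 / d)) with 1 in HT by (field; lra). lra. }
  lra.
Qed.

Theorem mainTheorem2 (c : R) (hc : 1 <= c) :
  exists eps : nat -> R,
    Un_cv eps 0 /\
    exists N : nat, forall n : nat, (N <= n)%nat ->
      prob_L c n = Rpower (INR n) (- Kc c + eps n).
Proof.
  exists (fun n => ln (prob_L c n) / ln (INR n) + Kc c).
  split.
  - intros e He.
    destruct (prob_bounds c hc (e / 2) ltac:(lra)) as [N1 HN1].
    destruct (ln_large 1) as [N2 HN2].
    exists (max N1 N2). intros n Hn. unfold R_dist.
    destruct (HN1 n ltac:(lia)) as [Hl Hu]. destruct (HN2 n ltac:(lia)) as [HT _].
    set (T := ln (INR n)) in *. set (p := prob_L c n) in *.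
    assert (Hp : 0 < p) by (eapply Rlt_le_trans; [apply exp_pos| exact Hl]).
    assert (L1 : (- Kc c - e / 2) * T <= ln p).
    { rewrite <- (ln_exp ((- Kc c - e / 2) * T)). apply ln_le_mono; [apply exp_pos| auto]. }
    assert (L2 : ln p <= (- Kc c + e / 2) * T).
    { rewrite <- (ln_exp ((- Kc c + e / 2) * T)). apply ln_le_mono; auto. }
    assert (Q1 : - Kc c - e / 2 <= ln p / T).
    { apply Rmult_le_reg_r with T; [lra|]. unfold Rdiv. rewrite Rmult_assoc, Rinv_l by lra. lra. }
    assert (Q2 : ln p / T <= - Kc c + e / 2).
    { apply Rmult_le_reg_r with T; [lra|]. unfold Rdiv. rewrite Rmult_assoc, Rinv_l by lra. lra. }
    rewrite Rminus_0_r. apply Rabs_def1; lra.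
  - destruct (prob_bounds c hc 1 ltac:(lra)) as [N1 HN1].
    destruct (ln_large 1) as [N2 HN2].
    exists (max N1 N2). intros n Hn.
    destruct (HN1 n ltac:(lia)) as [Hl _]. destruct (HN2 n ltac:(lia)) as [HT _].
    assert (Hp : 0 < prob_L c n) by (eapply Rlt_le_trans; [apply exp_pos| exact Hl]).
    unfold Rpower.
    replace ((- Kc c + (ln (prob_L c n) / ln (INR n) + Kc c)) * ln (INR n)) with (ln (prob_L c n))
      by (field; lra).
    rewrite exp_ln; auto.
Qed.
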